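(* Let $a,b\in F$ with $v(a)\le\min\{0,v(b)\}$. Then for every integer $m<-v(3)$, $$\int_{t\in\mathfrak{p}^m\setminus\mathfrak{p}^{m+1}}\psi(at^3+bt)\,dt=0.$$
   Context: $F$ is a non-archimedean local field of characteristic $0$ and odd residue characteristic, with maximal ideal $\mathfrak{p}$ of its ring of integers $\mathcal{O}$, normalised valuation $v$, a fixed unramified additive character $\psi$ (trivial on $\mathcal{O}$, nontrivial on $\mathfrak{p}^{-1}$), and Haar measure $dt$ with $\mathrm{vol}(\mathcal{O})=1$. *)

(* Defs.v *)
From HB Require Import structures.
From mathcomp Require Import all_boot all_order all_algebra.
From mathcomp Require Import all_classical all_reals.
From mathcomp Require Import topology normedtype measure lebesgue_integral.
From mathcomp.real_closed Require Import complex.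
Set Implicit Arguments. Unset Strict Implicit. Unset Printing Implicit Defensive.
Import Order.TTheory GRing.Theory Num.Theory.
Local Open Scope ring_scope.
Local Open Scope classical_set_scope.

Section LocalField.
Variables (F : fieldType) (v : F -> int).

(* [v] is the normalised valuation on F^x; v 0 = +oo is encoded by always
   treating 0 separately. *)

Definition pow_ideal (n : int) : set F := [set x | x = 0 \/ n <= v x].

Definition ring_of_integers : set F := pow_ideal 0.

Definition annulus (m : int) : set F := pow_ideal m `\` pow_ideal (m + 1).

Definition normalised_discrete_valuation : Prop :=
  [/\ forall x y, x != 0 -> y != 0 -> v (x * y) = v x + v y,
      forall x y, x != 0 -> y != 0 -> x + y != 0 -> Order.min (v x) (v y) <= v (x + y)
    & exists pi, pi != 0 /\ v pi = 1].

Definition complete_wrt_v : Prop :=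
  forall u : nat -> F,
    (forall N : int, exists n0, forall i j, (n0 <= i)%N -> (n0 <= j)%N ->
        pow_ideal N (u i - u j)) ->
    exists l, forall N : int, exists n0, forall i, (n0 <= i)%N -> pow_ideal N (u i - l).

Definition finite_residue_field : Prop :=
  exists s : seq F, (forall y, y \in s -> ring_of_integers y) /\
    forall x, ring_of_integers x -> exists2 y, y \in s & pow_ideal 1 (x - y).

Definition residue_char (p : nat) : Prop :=
  prime p /\ pow_ideal 1 (p%:R : F).

Definition nonarch_local_field_char0_odd : Prop :=
  [/\ normalised_discrete_valuation, complete_wrt_v, finite_residue_field,
      [pchar F] =i pred0
    & exists p, residue_char p /\ p != 2%N].

(* balls { x | x - c in p^n }; they generate the Borel sigma-algebra *)
Definition balls : set (set F) :=
  [set B | exists c (n : int), B = [set x | pow_ideal n (x - c)]].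

End LocalField.

Definition pF (F : fieldType) := F.
HB.instance Definition _ (F : fieldType) := Choice.on (pF F).
HB.instance Definition _ (F : fieldType) := isPointed.Build (pF F) 0.

Definition Fmeas (F : fieldType) (v : F -> int) :=
  g_sigma_algebraType (@balls (pF F) v).

Definition normalised_haar (R : realType) (F : fieldType) (v : F -> int)
    (mu : {measure set (Fmeas v) -> \bar R}) : Prop :=
  (forall (x : F) (A : set (Fmeas v)), measurable A ->
      mu [set (x + y : F) | y in A] = mu A)
  /\ mu (ring_of_integers v : set (Fmeas v)) = 1%E.

Definition unramified_additive_character (R : realType) (F : fieldType)
    (v : F -> int) (psi : F -> R[i]) : Prop :=
  [/\ forall x y, psi (x + y) = psi x * psi y,
      forall x, `|psi x| = 1,
      forall x, ring_of_integers v x -> psi x = 1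
    & exists x, pow_ideal v (-1) x /\ psi x != 1].

(* Main.v *)
Require Import Defs.
From HB Require Import structures.
From mathcomp Require Import all_boot all_order all_algebra.
From mathcomp Require Import all_classical all_reals.
From mathcomp Require Import topology normedtype measure lebesgue_integral.
From mathcomp.real_closed Require Import complex.
From mathcomp Require Import zify ring measurable_realfun numfun.
Import Order.TTheory GRing.Theory Num.Theory.
Local Open Scope ring_scope.
Local Open Scope classical_set_scope.
Section Val.
Variables (F : fieldType) (v : F -> int).
Hypothesis Hv : normalised_discrete_valuation v.
Local Notation P := (pow_ideal v).

Lemma vM {x y} : x != 0 -> y != 0 -> v (x * y) = v x + v y.
Proof. by move=> x0 y0; case: Hv => h _ _; apply: h. Qed.

Lemma v1 : v 1 = 0.
Proof.
have h : v 1 = v 1 + v 1 by rewrite -vM ?mulr1 ?oner_neq0.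
lia.
Qed.

Lemma vN1 : v (-1) = 0.
Proof.
have h1 : (-1 : F) != 0 by rewrite oppr_eq0 oner_neq0.
have := vM h1 h1; rewrite mulrNN mulr1 v1 => h. lia.
Qed.

Lemma vN x : x != 0 -> v (- x) = v x.
Proof.
move=> x0; have h1 : (-1 : F) != 0 by rewrite oppr_eq0 oner_neq0.
by rewrite -mulN1r vM // vN1 add0r.
Qed.

Lemma vV x : x != 0 -> v x^-1 = - v x.
Proof.
move=> x0; have h : v 1 = v x + v x^-1 by rewrite -(mulfV x0) vM ?invr_neq0.
rewrite v1 in h; lia.
Qed.

Lemma pI0 n : P n 0.
Proof. by left. Qed.

Lemma pI_le n n' x : n <= n' -> P n' x -> P n x.
Proof. move=> h [->|h']; [by left|right; lia]. Qed.

Lemma pID n x y : P n x -> P n y -> P n (x + y).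
Proof.
move=> [->|hx]; first by rewrite add0r.
move=> [->|hy]; first by rewrite addr0 /P /pow_ideal; right.
have [x0|x0] := eqVneq x 0; first by rewrite x0 add0r; right.
have [y0|y0] := eqVneq y 0; first by rewrite y0 addr0; right.
have [s0|s0] := eqVneq (x + y) 0; first by left.
right; case: Hv => _ /(_ x y x0 y0 s0) h _.
apply: le_trans h; rewrite le_min hx hy //.
Qed.

Lemma pIN n x : P n x -> P n (- x).
Proof.
move=> [->|h]; first by rewrite oppr0; left.
have [x0|x0] := eqVneq x 0; first by rewrite x0 oppr0; left.
by right; rewrite vN.
Qed.

Lemma pIB n x y : P n x -> P n y -> P n (x - y).
Proof. by move=> hx hy; apply: pID => //; apply: pIN. Qed.

Lemma pIM {n n' x y} : P n x -> P n' y -> P (n + n') (x * y).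
Proof.
move=> [->|hx]; first by rewrite mul0r; left.
move=> [->|hy]; first by rewrite mulr0; left.
have [x0|x0] := eqVneq x 0; first by rewrite x0 mul0r; left.
have [y0|y0] := eqVneq y 0; first by rewrite y0 mulr0; left.
right; rewrite vM //; lia.
Qed.

Lemma pIv n {x} : x != 0 -> P n x <-> n <= v x.
Proof. move=> x0; split; [by case=> // /eqP; rewrite (negbTE x0)|by right]. Qed.

Lemma v_strict x y : x != 0 -> (y = 0 \/ v x < v y) -> x + y != 0 /\ v (x + y) = v x.
Proof.
move=> x0 hy.
have hy' : P (v x + 1) y by case: hy => [->|h]; [left|right; lia].
have hs : x + y != 0.
  apply/eqP => s0; have : y = - x by apply/eqP; rewrite -subr_eq0 opprK addrC s0.
  move=> yx; move: hy'; rewrite yx => /pIN; rewrite opprK => /(pIv _ x0); lia.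
split => //.
have h1 : P (v x) (x + y) by apply: pID; [right|apply: pI_le hy'; lia].
move/(pIv _ hs): h1 => h1.
suff : ~ (v x + 1 <= v (x + y)) by lia.
move=> h3; have : P (v x + 1) ((x + y) - y) by apply: pIB => //; right.
rewrite addrK => /(pIv _ x0); lia.
Qed.


Variable pi : F.
Hypotheses (pi0 : pi != 0) (vpi : v pi = 1).

Lemma vXn (n : nat) : v (pi ^+ n) = n.
Proof.
elim: n => [|n IH]; first by rewrite expr0 v1.
rewrite exprSr vM ?expf_neq0 // IH vpi; lia.
Qed.

Lemma piz0 (z : int) : pi ^ z != 0.
Proof. by rewrite expfz_neq0. Qed.

Lemma vXz (z : int) : v (pi ^ z) = z.
Proof.
case: z => n; first by rewrite -exprnP vXn.
rewrite NegzE -exprnN vV ?expf_neq0 // vXn //.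
Qed.

Lemma pIXz (z : int) : P z (pi ^ z).
Proof. by right; rewrite vXz. Qed.

Lemma piXzN (z : int) : pi ^ z * pi ^ (- z) = 1.
Proof. by rewrite -invr_expz mulfV // piz0. Qed.

Hypothesis Hres : finite_residue_field v.

Lemma cover_ex (a : int) (n : nat) : exists L : seq F,
  (forall l, l \in L -> P a l) /\
  (forall x, P a x -> exists2 l, l \in L & P (a + n%:Z) (x - l)).
Proof.
case: Hres => S [SO Scov].
elim: n => [|n [L [LP Lcov]]].
  exists [:: 0]; split; first by move=> l; rewrite inE => /eqP ->; left.
  move=> x hx; exists 0; first by rewrite inE. by rewrite addr0 subr0.
exists [seq l + pi ^ (a + n%:Z) * s | l <- L, s <- S]; split.
  move=> z /allpairsP [[l s] /= [hl hs ->]].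
  apply: pID; first exact: LP.
  apply: (@pI_le _ (a + n%:Z + 0)); first lia.
  apply: pIM; first exact: pIXz.
  exact: SO.
move=> x /Lcov [l hl hxl].
set w := (x - l) * pi ^ (- (a + n%:Z)).
have hw : ring_of_integers v w.
  rewrite /ring_of_integers -(subrr (a + n%:Z)); apply: pIM => //; exact: pIXz.
have [s hs hws] := Scov w hw.
exists (l + pi ^ (a + n%:Z) * s); first by apply/allpairsP; exists (l, s).
have -> : x - (l + pi ^ (a + n%:Z) * s) = pi ^ (a + n%:Z) * (w - s).
  rewrite mulrBr /w mulrCA piXzN mulr1; ring.
have -> : a + n.+1%:Z = (a + n%:Z) + 1 by lia.
apply: pIM => //; exact: pIXz.
Qed.

Lemma dedup_ex (b : int) (L : seq F) : exists L' : seq F,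
  [/\ {subset L' <= L}, uniq L',
      (forall x y, x \in L' -> y \in L' -> P b (x - y) -> x = y) &
      forall x, x \in L -> exists2 y, y \in L' & P b (x - y)].
Proof.
elim: L => [|x L [L' [sub u inc cov]]].
  by exists [::]; split => // x; rewrite in_nil.
case: (pselect (exists2 y, y \in L' & P b (x - y))) => [hx|hx].
  exists L'; split => //.
    by move=> z /sub; rewrite inE => ->; rewrite orbT.
  move=> z; rewrite inE => /orP[/eqP ->|/cov //]; exact: hx.
exists (x :: L'); split.
- move=> z; rewrite !inE => /orP[->//|/sub ->]; by rewrite orbT.
- rewrite /= u andbT; apply/negP => xL; apply: hx; exists x => //.
  by rewrite subrr; left.
- move=> y z; rewrite !inE => /orP[/eqP ->|yL] /orP[/eqP ->|zL] //.
  + move=> h; exfalso; apply: hx; by exists z.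
  + move=> h; exfalso; apply: hx; exists y => //.
    by rewrite -opprB; apply: pIN.
  + exact: inc.
- move=> z; rewrite inE => /orP[/eqP ->|/cov [y yL hy]].
    by exists x; rewrite ?inE ?eqxx // subrr; left.
  by exists y; rewrite // inE yL orbT.
Qed.

Definition reps (Q : set F) (b : int) (L : seq F) :=
  [/\ uniq L, (forall l, l \in L -> Q l),
      (forall x y, x \in L -> y \in L -> P b (x - y) -> x = y) &
      forall x, Q x -> exists2 l, l \in L & P b (x - l)].

Lemma reps_ex (a b : int) : a <= b -> exists L, reps (P a) b L.
Proof.
move=> ab.
have [L [LP Lcov]] := cover_ex a `|b - a|%N.
have e : a + `|b - a|%N%:Z = b by lia.
rewrite e in Lcov.
have [L' [sub u inc cov]] := dedup_ex b L.
exists L'; split.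
- exact: u.
- by move=> l ls; apply: LP; apply: sub.
- exact: inc.
- move=> x /Lcov [l /cov [y yL hy] hl]; exists y => //.
  have -> : x - y = (x - l) + (l - y) by ring.
  exact: pID.
Qed.


Lemma sum_shift (Q : set F) (b : int) (L : seq F) (y : F) (V : nmodType) (phi : F -> V) :
  reps Q b L -> (forall z, Q z -> Q (z + y)) ->
  (forall z z', Q z -> Q z' -> P b (z - z') -> phi z = phi z') ->
  \sum_(l <- L) phi (l + y) = \sum_(l <- L) phi l.
Proof.
move=> [u LQ inc cov] Qy phiE.
pose pr z := fun l => `[< P b (z - l) >].
pose rho z := nth 0 L (find (pr z) L).
have rhoP z : Q z -> rho z \in L /\ P b (z - rho z).
  move=> Qz; have hh : has (pr z) L.
    by have [l lL hl] := cov z Qz; apply/hasP; exists l => //; apply/asboolP.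
  split; first by rewrite /rho mem_nth // -has_find.
  by apply/asboolP; apply: (nth_find 0 hh).
pose g l := rho (l + y).
have e1 : \sum_(l <- L) phi (l + y) = \sum_(l <- L) phi (g l).
  apply: eq_big_seq => l lL; have Ql := Qy _ (LQ _ lL).
  have [gL hg] := rhoP _ Ql.
  by apply: phiE => //; apply: LQ.
rewrite e1 -(big_map g xpredT phi); apply: perm_big.
have ginj : {in L &, injective g}.
  move=> l1 l2 l1L l2L e.
  have [_ h1] := rhoP _ (Qy _ (LQ _ l1L)).
  have [_ h2] := rhoP _ (Qy _ (LQ _ l2L)).
  apply: inc => //.
  have -> : l1 - l2 = (l1 + y - g l1) - (l2 + y - g l2) by rewrite e; ring.
  exact: pIB.
have um : uniq (map g L) by rewrite map_inj_in_uniq.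
have sub : {subset map g L <= L}.
  by move=> z /mapP [l lL ->]; have [] := rhoP _ (Qy _ (LQ _ lL)).
have [_ eqL] := uniq_min_size um sub (eq_leq (esym (size_map g L))).
exact: uniq_perm.
Qed.

Variable R : realType.
Variable psi : F -> R[i].
Hypothesis Hpsi : unramified_additive_character v psi.
Lemma psiD x y : psi (x + y) = psi x * psi y.
Proof. by case: Hpsi. Qed.

Lemma psiO x : P 0 x -> psi x = 1.
Proof. by case: Hpsi => _ _ h _; apply: h. Qed.

Lemma psi_cong x y : P 0 (x - y) -> psi x = psi y.
Proof.
move=> h; have -> : x = y + (x - y) by ring.
by rewrite psiD (psiO _ h) mulr1.
Qed.

Lemma char_sum (k : int) (X : seq F) (HX : reps (P k) (k + 1) X)
  (c : F) (c0 : c != 0) (vc : v c = - k - 1) :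
  \sum_(x <- X) psi (c * x) = 0.
Proof.
case: Hpsi => _ _ _ [z [hz pz]].
have z0 : z != 0 by apply: contraNneq pz => ->; apply/eqP; apply: psiO; left.
have cV : P (k + 1) c^-1 by right; rewrite vV // vc; lia.
have hy : P k (z / c).
  apply: (@pI_le _ (-1 + (k + 1))); first lia.
  exact: pIM.
have := @sum_shift (P k) (k + 1) X (z / c) _ (fun x => psi (c * x)) HX.
move=> h.
have {h} h : psi z * \sum_(x <- X) psi (c * x) = \sum_(x <- X) psi (c * x).
  rewrite -[RHS]h.
  - rewrite big_distrr /=; apply: eq_bigr => l _.
    by rewrite mulrDr mulrCA mulfV // mulr1 psiD mulrC.
  - by move=> w hw; apply: pID.
  - move=> w w' _ _ hw.
    apply: psi_cong.
    rewrite -mulrBr.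
    have -> : (0 : int) = (- k - 1) + (k + 1) by lia.
    by apply: pIM => //; right; rewrite vc.
apply/eqP; move: h => /eqP; rewrite -subr_eq0 -{2}(mul1r (\sum_(x <- X) _)) -mulrBl.
by rewrite mulf_eq0 subr_eq0 (negbTE pz).
Qed.


Lemma pI_nat n : P 0 (n%:R : F).
Proof.
elim: n => [|n IH]; first by left.
by rewrite mulrS; apply: pID => //; right; rewrite v1.
Qed.

Variables (a b : F) (m : int).
Hypotheses (a0 : a != 0) (va0 : v a <= 0) (vab : b != 0 -> v a <= v b)
  (Hm : m < - v 3%:R) (H3 : (3%:R : F) != 0).

Let f t := a * t ^+ 3 + b * t.
Let N := - (v a + v 3%:R + m + m).

Lemma e_ge0 : 0 <= v 3%:R.
Proof. by have /(pIv _ H3) := pI_nat 3. Qed.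

Lemma pIa : P (v a) a.
Proof. by right. Qed.
Lemma pIb : P (v a) b.
Proof. have [->|b0] := eqVneq b 0; [by left|by right; apply: vab]. Qed.
Lemma pI3 : P (v 3%:R) (3%:R : F).
Proof. by right. Qed.

Lemma loc_const t y : P m t -> P N y -> P 0 (f (t + y) - f t).
Proof.
move=> ht hy; have he := e_ge0.
have -> : f (t + y) - f t = 3%:R * a * (t * t) * y + 3%:R * a * t * (y * y)
    + a * (y * (y * y)) + b * y by rewrite /f; ring.
have h1 := pIM (pIM (pIM pI3 pIa) (pIM ht ht)) hy.
have h2 := pIM (pIM (pIM pI3 pIa) ht) (pIM hy hy).
have h3 := pIM pIa (pIM hy (pIM hy hy)).
have h4 := pIM pIb hy.
rewrite /N in h1 h2 h3 h4.
apply: pID; [apply: pID; [apply: pID|]|].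
- by apply: pI_le h1; lia.
- by apply: pI_le h2; lia.
- by apply: pI_le h3; lia.
- by apply: pI_le h4; lia.
Qed.

Let fd t := 3%:R * a * (t * t) + b.

Lemma annP t : annulus v m t -> t != 0 /\ v t = m.
Proof.
move=> [ht hn]; have t0 : t != 0 by apply: contra_notN hn => /eqP ->; left.
split => //; move/(pIv _ t0): ht => ht.
have : ~ (m + 1 <= v t) by move=> h; apply: hn; right.
lia.
Qed.

Lemma deriv t x : annulus v m t -> P (N - 1) x ->
  P 0 (f (t + x) - f t - fd t * x).
Proof.
move=> /annP [t0 vt] hx; have he := e_ge0.
have ht : P m t by right; rewrite vt.
have -> : f (t + x) - f t - fd t * x = 3%:R * a * t * (x * x)
    + a * (x * (x * x)) by rewrite /f /fd; ring.
have h2 := pIM (pIM (pIM pI3 pIa) ht) (pIM hx hx).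
have h3 := pIM pIa (pIM hx (pIM hx hx)).
rewrite /N in h2 h3.
apply: pID.
- by apply: pI_le h2; lia.
- by apply: pI_le h3; lia.
Qed.

Lemma vfd t : annulus v m t -> fd t != 0 /\ v (fd t) = - (N - 1) - 1.
Proof.
move=> /annP [t0 vt]; have he := e_ge0.
have x0 : 3%:R * a * (t * t) != 0 by rewrite !mulf_neq0.
have vx : v (3%:R * a * (t * t)) = v 3%:R + v a + m + m.
  rewrite vM ?mulf_neq0 // vM // vM // vt; lia.
have := @v_strict _ b x0.
case.
  have [->|b0] := eqVneq b 0; [by left|right; rewrite vx; have := vab b0; lia].
move=> h1 h2; split => //; rewrite /fd h2 vx /N; lia.
Qed.


Lemma k_ge : m + 1 <= N - 1.
Proof. have := e_ge0; rewrite /N; lia. Qed.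

Lemma ann_shift z x : annulus v m z -> P (N - 1) x -> annulus v m (z + x).
Proof.
move=> [hz hn] hx; have hk := k_ge.
have hx1 : P (m + 1) x by apply: pI_le hx.
split.
  by apply: pID => //; apply: pI_le hx1; lia.
move=> h; apply: hn; have -> : z = (z + x) - x by ring.
exact: pIB.
Qed.

Lemma main_sum (C : seq F) : reps (annulus v m) N C -> \sum_(c <- C) psi (f c) = 0.
Proof.
move=> HC.
have hk := k_ge.
have [X HX] := @reps_ex (N - 1) (N - 1 + 1) ltac:(lia).
have Sx x : x \in X -> \sum_(c <- C) psi (f c) =
    \sum_(c <- C) psi (f c) * psi (fd c * x).
  move=> xX; have hx : P (N - 1) x by case: HX => _ hX _ _; apply: hX.
  rewrite -(@sum_shift (annulus v m) N C x _ (fun c => psi (f c))) //; last first.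
  - move=> z z' hz hz' hzz; apply: psi_cong.
    have -> : f z = f (z' + (z - z')) by rewrite addrC subrK.
    by apply: loc_const => //; case: hz'.
  - by move=> z hz; apply: ann_shift.
  apply: eq_big_seq => c cC.
  have hc : annulus v m c by case: HC => _ hC _ _; apply: hC.
  have -> : f (c + x) = f c + fd c * x + (f (c + x) - f c - fd c * x) by ring.
  by rewrite psiD (psiO _ (deriv c x hc hx)) mulr1 psiD.
have e1 : \sum_(x <- X) \sum_(c <- C) psi (f c) =
    \sum_(x <- X) \sum_(c <- C) psi (f c) * psi (fd c * x).
  by apply: eq_big_seq => x xX; apply: Sx.
rewrite [RHS]exchange_big /= in e1.
have e2 : \sum_(c <- C) \sum_(x <- X) psi (f c) * psi (fd c * x) = 0.
  apply: big1_seq => c /andP [_ cC].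
  have hc : annulus v m c by case: HC => _ hC _ _; apply: hC.
  have [fd0 vfd0] := vfd c hc.
  by rewrite -big_distrr /= (@char_sum _ _ HX _ fd0 vfd0) mulr0.
rewrite e2 in e1.
have Xn : (0 < size X)%N.
  case: HX => _ _ _ /(_ 0 (pI0 _)) [l lX _].
  by move: lX; case: (X) => //; rewrite in_nil.
move: e1; set S := \sum_(c <- C) psi (f c).
have -> : \sum_(x <- X) S = S *+ size X.
  by elim: (X) => [|y Y IH]; rewrite ?big_nil ?big_cons ?IH ?mulrS.
move/eqP; rewrite -mulr_natr mulf_eq0 pnatr_eq0 => /orP[/eqP //|].
by move/eqP => h; move: Xn; rewrite h.
Qed.


Lemma ann_reps_ex : exists C, reps (annulus v m) N C.
Proof.
have hk := k_ge.
have [C [u CP inc cov]] := @reps_ex m N ltac:(lia).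
exists [seq c <- C | `[< annulus v m c >]]; split.
- exact: filter_uniq.
- by move=> l; rewrite mem_filter => /andP [/asboolP].
- by move=> x y; rewrite !mem_filter => /andP [_ xC] /andP [_ yC]; apply: inc.
- move=> x hx; have [l lC hl] := cov x (proj1 hx).
  exists l => //; rewrite mem_filter lC andbT; apply/asboolP.
  have -> : l = x + (l - x) by ring.
  apply: ann_shift => //; apply: (@pI_le _ N); first lia.
  by rewrite -opprB; apply: pIN.
Qed.

Lemma psif_inv z z' : annulus v m z -> annulus v m z' -> P N (z - z') ->
  psi (f z) = psi (f z').
Proof.
move=> hz hz' hzz; apply: psi_cong.
have -> : f z = f (z' + (z - z')) by rewrite addrC subrK.
by apply: loc_const => //; case: hz'.
Qed.

Lemma N_ge0 : 0 <= N.
Proof. have := k_ge; lia. Qed.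

Lemma ann_ball c x : annulus v m c -> P N (x - c) -> annulus v m x.
Proof.
move=> hc hx; have hk := k_ge.
have -> : x = c + (x - c) by ring.
apply: ann_shift => //; apply: (@pI_le _ N) => //; lia.
Qed.

End Val.
Section Meas.
Variables (R : realType) (F : fieldType) (v : F -> int).
Variable mu : {measure set (Fmeas v) -> \bar R}.
Hypothesis Hmu : normalised_haar mu.
Hypothesis Hv : normalised_discrete_valuation v.
Local Notation P := (pow_ideal v).
Local Notation T := (Fmeas v).

Definition ball (N : int) (c : F) : set T := [set x | P N (x - c)].

Lemma ball_meas N c : measurable (ball N c).
Proof. apply: sub_sigma_algebra; by exists c, N. Qed.

Lemma ball_mu N c : mu (ball N c) = mu (ball N 0).
Proof.
have -> : ball N c = [set (c + y : F) | y in ball N 0].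
  apply/seteqP; split => x /=.
    by move=> h; exists (x - c); rewrite /ball /= ?subr0 //; ring.
  move=> [y hy <-]; move: hy; rewrite /ball /= subr0. by have -> : c + y - c = y by ring.
by case: Hmu => h _; apply: h; apply: ball_meas.
Qed.

Lemma ball_fin N : 0 <= N -> mu (ball N 0) \is a fin_num.
Proof.
move=> hN; rewrite ge0_fin_numE ?measure_ge0 //.
apply: (@le_lt_trans _ _ 1%E); last by rewrite ltry.
case: Hmu => _ <-.
have -> : (ring_of_integers v : set T) = ball 0 0.
  by apply/seteqP; split => x /=; rewrite /ball /= subr0.
apply: le_measure; rewrite ?inE; try exact: ball_meas.
move=> x; rewrite /ball /= subr0 => -[->|h]; [by left|right; lia].
Qed.


Lemma integrable_ball (A : set T) N c : measurable A -> 0 <= N ->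
  mu.-integrable A (fun t => (\1_(ball N c) t)%:E).
Proof.
move=> mA hN; apply/integrableP; split.
  apply/measurable_EFinP; apply: measurable_indic; exact: ball_meas.
rewrite (eq_integral (fun t => (\1_(ball N c) t)%:E)); last first.
  by move=> t _; rewrite gee0_abs // lee_fin.
rewrite integral_indic //; last exact: ball_meas.
apply: (@le_lt_trans _ _ (mu (ball N c))).
  apply: le_measure; rewrite ?inE.
  - by apply: measurableI => //; exact: ball_meas.
  - exact: ball_meas.
  - by move=> x [].
rewrite ball_mu; have := ball_fin N hN; rewrite ge0_fin_numE ?measure_ge0 //.
Qed.


Lemma integral_pieces (A : set T) (N : int) (C : seq F) (h : F -> R) :
  measurable A -> 0 <= N -> reps F v A N C ->
  (forall c x, A c -> P N (x - c) -> A x) ->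
  (forall z z', A z -> A z' -> P N (z - z') -> h z = h z') ->
  (\int[mu]_(t in A) (h t)%:E = ((\sum_(c <- C) h c) * fine (mu (ball N 0)))%:E)%E.
Proof.
move=> mA hN [u CA inc cov] Aball hinv.
transitivity (\int[mu]_(t in A) \sum_(c <- C) ((h c)%:E * (\1_(ball N c) t)%:E))%E.
  apply: eq_integral => t /set_mem tA.
  under eq_bigr do rewrite -EFinM.
  rewrite sumEFin; congr (_%:E).
  have [c0 c0C hc0] := cov t tA.
  rewrite (bigD1_seq c0) //= big1_seq ?addr0.
    by rewrite indicE mem_set // mulr1; apply: hinv => //; apply: CA.
  move=> c /andP [cne cC]; rewrite indicE memNset ?mulr0 //.
  move=> hc; move/eqP: cne; apply; apply: inc => //.
  have -> : c - c0 = (t - c0) - (t - c) by ring.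
  exact: (@pIB _ _ Hv _ _ _ hc0 hc).
rewrite integral_sum //; last first.
  by move=> c; apply: integrableZl => //; apply: integrable_ball.
have M := ball_fin N hN.
transitivity (\sum_(c <- C) ((h c) * fine (mu (ball N 0)))%:E)%E.
  apply: eq_big_seq => c cC.
  rewrite integralZl //; last exact: integrable_ball.
  rewrite integral_indic //; last exact: ball_meas.
  rewrite setIidl; last by move=> x hx; apply: (Aball c) => //; apply: CA.
  by rewrite ball_mu EFinM fineK.
by rewrite sumEFin big_distrl.
Qed.

End Meas.

Lemma Re_sum (R : realType) (I : Type) (s : seq I) (G : I -> R[i]) :
  complex.Re (\sum_(x <- s) G x) = \sum_(x <- s) complex.Re (G x).
Proof.
elim: s => [|x s IH]; first by rewrite !big_nil.
by rewrite !big_cons -IH; case: (G x); case: (\sum_(y <- s) G y).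
Qed.

Lemma Im_sum (R : realType) (I : Type) (s : seq I) (G : I -> R[i]) :
  complex.Im (\sum_(x <- s) G x) = \sum_(x <- s) complex.Im (G x).
Proof.
elim: s => [|x s IH]; first by rewrite !big_nil.
by rewrite !big_cons -IH; case: (G x); case: (\sum_(y <- s) G y).
Qed.

Theorem lemma7p6 (R : realType) (F : fieldType) (v : F -> int)
    (HF : nonarch_local_field_char0_odd v)
    (mu : {measure set (Fmeas v) -> \bar R}) (Hmu : normalised_haar mu)
    (psi : F -> R[i]) (Hpsi : unramified_additive_character v psi)
    (a b : F)
    (Hab : a != 0 /\ v a <= 0 /\ (b != 0 -> v a <= v b))
    (m : int) (Hm : m < - v 3%:R) :
  (\int[mu]_(t in (annulus v m : set (Fmeas v)))
      (complex.Re (psi (a * t ^+ 3 + b * t)))%:E = 0)%E /\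
  (\int[mu]_(t in (annulus v m : set (Fmeas v)))
      (complex.Im (psi (a * t ^+ 3 + b * t)))%:E = 0)%E.
Proof.
case: HF => Hv _ Hres Hchar _.
have [pi [pi0 vpi]] : exists pi, pi != 0 /\ v pi = 1 by case: Hv.
case: Hab => a0 [va0 vab].
have H3 : (3%:R : F) != 0 by rewrite ((pcharf0P F).1 Hchar).
have [C HC] := @ann_reps_ex F v Hv pi pi0 vpi Hres a b m a0 va0 vab Hm H3.
have Hs := @main_sum F v Hv pi pi0 vpi Hres R psi Hpsi a b m a0 va0 vab Hm H3 C HC.
have hN := @N_ge0 F v Hv pi pi0 vpi a b m a0 va0 vab Hm H3.
have mA : measurable (annulus v m : set (Fmeas v)).
  have -> : (annulus v m : set (Fmeas v)) = ball F v m 0 `\` ball F v (m + 1) 0.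
    by apply/seteqP; split => x; rewrite /ball /annulus /= !subr0.
  by apply: measurableD; apply: ball_meas.
have Hball := @ann_ball F v Hv pi pi0 vpi a b m a0 va0 vab Hm H3.
have Hinv := @psif_inv F v Hv pi pi0 vpi R psi Hpsi a b m a0 va0 vab Hm H3.
split.
- rewrite (@integral_pieces R F v mu Hmu Hv _ _ C ( fun t => complex.Re (psi (a * t ^+ 3 + b * t))) mA hN HC).
  + have e : \sum_(c <- C) complex.Re (psi (a * c ^+ 3 + b * c)) = 0.
      by rewrite -Re_sum Hs.
    by rewrite e mul0r.
  + exact: Hball.
  + by move=> z z' hz hz' hzz /=; rewrite (Hinv z z' hz hz' hzz).
- rewrite (@integral_pieces R F v mu Hmu Hv _ _ C ( fun t => complex.Im (psi (a * t ^+ 3 + b * t))) mA hN HC).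
  + have e : \sum_(c <- C) complex.Im (psi (a * c ^+ 3 + b * c)) = 0.
      by rewrite -Im_sum Hs.
    by rewrite e mul0r.
  + exact: Hball.
  + by move=> z z' hz hz' hzz /=; rewrite (Hinv z z' hz hz' hzz).
Qed.
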